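(* Let $F\subsetneq K$ be fields of characteristic $0$, with $F$ a proper nonempty subfield of $K$. Let $p(x)=\sum_{k=0}^{n}a_k x^k\in K[x]$ be non-constant with $a_n\neq 0$, and let $q(x)=\sum_{j=0}^{m}b_j x^j\in K[x]$ with $b_m\neq 0$. Suppose $a_nb_m\in F$. Then $D_F(p\circ q)\geq D_F(q)$.
   Context: For sets $F\subset K$ and $p(x)=\sum_{k=0}^{n}a_kx^k\in K[x]$ with $a_n\neq 0$, the $F$ deficit $D_F(p)$ is defined as follows: if $p\in K[x]\setminus F[x]$, then $D_F(p)=n-\max\{0\le k\le n: a_k\notin F\}$; if $p\in F[x]$, then $D_F(p)=n$. Here $F[x]$ denotes the set of polynomials with all coefficients in $F$. *)

(* Defs.v *)
From HB Require Import structures.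
From mathcomp Require Import all_boot all_order all_algebra.
Set Implicit Arguments. Unset Strict Implicit. Unset Printing Implicit Defensive.
Import Order.TTheory GRing.Theory Num.Theory.
Local Open Scope ring_scope.

Definition deficit (K : fieldType) (F : {pred K}) (p : {poly K}) : nat :=
  if p \is a polyOver F then (size p).-1
  else ((size p).-1 - \max_(k < size p | (p`_k)%R \notin F) (k : nat))%N.

(* Main.v *)
Require Import Defs.
From HB Require Import structures.
From mathcomp Require Import all_boot all_order all_algebra.
From mathcomp Require Import zify.
Import GRing.Theory.
Local Open Scope ring_scope.

Section Aux.
Variables (K : fieldType) (F : {pred K}) (Fsub : divring_closed F).

Lemma F1 : 1 \in F. Proof. by case: Fsub. Qed.
Lemma FB x y : x \in F -> y \in F -> x - y \in F.
Proof. by case: Fsub => _ H _; apply: H. Qed.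
Lemma Fdiv x y : x \in F -> y \in F -> x / y \in F.
Proof. by case: Fsub => _ _ H; apply: H. Qed.
Lemma F0 : 0 \in F. Proof. by rewrite -(subrr 1) FB ?F1. Qed.
Lemma FD x y : x \in F -> y \in F -> x + y \in F.
Proof. move=> hx hy; have -> : x + y = x - (0 - y) by rewrite sub0r opprK. by rewrite FB // FB // F0. Qed.
Lemma FM x y : x \in F -> y \in F -> x * y \in F.
Proof.
move=> hx hy; have [->|y0] := eqVneq y 0; first by rewrite mulr0 F0.
by rewrite -[y]invrK Fdiv // -div1r Fdiv // F1.
Qed.
Lemma Fsum (I : Type) (r : seq I) (P : pred I) (f : I -> K) :
  (forall i, P i -> f i \in F) -> \sum_(i <- r | P i) f i \in F.
Proof.
move=> H; elim/big_rec: _ => [|i x Pi hx]; first exact: F0.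
by apply: FD => //; apply: H.
Qed.

Lemma pow_coefF (q : {poly K}) (N : nat) :
  (forall l, (N < l)%N -> q`_l \in F) ->
  forall k i, (k * (size q).-1 + N < i + (size q).-1)%N -> (q ^+ k)`_i \in F.
Proof.
move=> Hq; set m := (size q).-1.
elim=> [|k IH] i Hi.
  by rewrite expr0 coefC; case: (i == 0)%N; [exact: F1| exact: F0].
rewrite exprSr coefM; apply: Fsum => -[j /= hj] _.
have [hl|hl] := leqP (i - j) N.
  have : (size (q ^+ k) <= j)%N.
    apply: leq_trans (size_poly_exp_leq q k) _; rewrite -/m; lia.
  by move/(nth_default 0) => ->; rewrite mul0r F0.
have [hm|hm] := leqP (i - j) m.
  by apply: FM; [apply: IH; rewrite -/m; lia | apply: Hq].
have : (size q <= i - j)%N by rewrite -/m in hm; lia.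
by move/(nth_default 0) => ->; rewrite mulr0 F0.
Qed.

End Aux.
Arguments F0 {K F}. Arguments Fdiv {K F}. Arguments FM {K F}. Arguments Fsum {K F}. Arguments pow_coefF {K F}.

Theorem theorem9 (K : fieldType) (F : {pred K})
  (Fsub : divring_closed F) (Fproper : exists x : K, x \notin F)
  (char0 : [pchar K] =i pred0)
  (p q : {poly K})
  (p_nonconst : (1 < size p)%N) (q_neq0 : q != 0)
  (lead_in_F : lead_coef p * lead_coef q \in F) :
  (deficit F (p \Po q) >= deficit F q)%N.
Proof.
set m := (size q).-1.
set d := deficit F q.
have dm : (d <= m)%N by rewrite /d /deficit; case: ifP => _; rewrite -/m; lia.
have [d0|dpos] := posnP d; first by rewrite d0.
set N := (m - d)%N.
have HqF : forall l, (N < l)%N -> q`_l \in F.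
  move=> l hl; move: dpos hl; rewrite /N /d /deficit.
  case: ifP => [H _ _|_].
    have [ls|ls] := ltnP l (size q); last by rewrite nth_default // (F0 Fsub).
    by move: H => /allP; apply; rewrite mem_nth.
  move=> _ hl.
  have [ls|ls] := ltnP l (size q); last by rewrite nth_default // (F0 Fsub).
  apply/negPn/negP => nF.
  have := leq_bigmax_cond (P := fun k : 'I_(size q) => q`_k \notin F)
     (F := fun k : 'I_(size q) => (k : nat)) (Ordinal ls) nF.
  rewrite /=; rewrite -/m in hl ls *.
  have : (\max_(k < size q | (q`_k)%R \notin F) (k : nat) <= m)%N.
    apply/bigmax_leqP => k _; rewrite /m; have := ltn_ord k; lia.
  move=> h1 h2.
  set M := \max_(k < size q | (q`_k)%R \notin F) (k : nat) in hl h1 h2.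
  lia.
have mpos : (0 < m)%N by lia.
have lqF : lead_coef q \in F by rewrite lead_coefE HqF // /N; lia.
have lq0 : lead_coef q != 0 by rewrite lead_coef_eq0.
have lpF : lead_coef p \in F.
  by rewrite -(mulfK lq0 (lead_coef p)) (Fdiv Fsub).
set n := (size p).-1.
have Hc : forall i, (n * m + N < i + m)%N -> (p \Po q)`_i \in F.
  move=> i hi; rewrite comp_polyE coef_sum; apply: (Fsum Fsub) => -[k /= hk] _.
  rewrite coefZ.
  have [kn|kn] := ltnP k n.
    have : (size (q ^+ k) <= i)%N.
      apply: leq_trans (size_poly_exp_leq q k) _; rewrite -/m.
      have : (k.+1 * m <= n * m)%N by apply: leq_mul; lia.
      rewrite mulSn.
      lia.
    by move/(nth_default 0) => ->; rewrite mulr0 (F0 Fsub).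
  have kE : k = n.
  move: kn hk; rewrite /n; case: (size p) => [|s] /= a b; lia.
  apply: (FM Fsub); first by rewrite kE -lead_coefE.
  have := @pow_coefF K F Fsub q N HqF k i; rewrite -/m kE; exact.
have szc : (size (p \Po q)).-1 = (n * m)%N by exact: size_comp_poly.
rewrite /deficit; case: ifP => _.
  rewrite szc; have : (1 * m <= n * m)%N by apply: leq_mul; lia. lia.
rewrite szc.
have : (\max_(k < size (p \Po q) | ((p \Po q)`_k)%R \notin F) (k : nat) <= n * m - d)%N.
  have mnm : (1 * m <= n * m)%N by apply: leq_mul; lia.
  apply/bigmax_leqP => k hk; rewrite leqNgt; apply/negP => hlt.
  by move: hk; rewrite Hc //; rewrite /N; lia.
have : (m <= n * m)%N by rewrite -{1}[m]mul1n; apply: leq_mul; lia.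
lia.
Qed.
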